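(* Suppose $\min\{d_1,\dots,d_{L-1}\}\ge d_{\min}$, and: if $L=2$, $\lambda\ne y_i^2$ for all $i\in[r_Y]$; if $L\ge3$, $\lambda\ne y_i^{2(L-1)}\big((\tfrac{L-2}{L})^{\frac{L}{2(L-1)}}+(\tfrac{L}{L-2})^{\frac{L-2}{2(L-1)}}\big)^{-2(L-1)}$ for all $i\in[r_Y]$. Let $\mu:=\min\{\min_{i\in[r_Y]}|\lambda-y_i^2|,\ \lambda\}$ and $$(\epsilon_0,\kappa_0)=\begin{cases}\Big(\big(\tfrac{\sqrt\lambda\,\mu}{2(\sqrt\lambda+y_1)}\big)^{1/2},\ \tfrac{2(\sqrt\lambda+y_1)}{\sqrt\lambda\,\mu}\Big),&L=2,\\[1ex] \Big(\min\big\{(\lambda/3)^{1/(2L-2)},\ (\sqrt\lambda/(3y_1))^{1/(L-2)}\big\},\ \tfrac{3\sqrt L}{2\lambda}\Big),&L\ge3.\end{cases}$$ Then for all $\bm W=(\bm W_1,\dots,\bm W_L)$ with $(\sum_l\|\bm W_l\|_F^2)^{1/2}\le\epsilon_0$, $$\Big(\sum_{l=1}^L\|\bm W_l\|_F^2\Big)^{1/2}\le\kappa_0\|\nabla G(\bm W)\|_F.$$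
   Context: Let $L\ge2$, $d_0,\dots,d_L$ positive integers, $d_{\min}=\min\{d_0,d_L\}$, $\lambda>0$, $y_1\ge\dots\ge y_{d_{\min}}\ge0$, $r_Y$ the number of positive $y_i$, and $\bm Y\in\mathbb R^{d_L\times d_0}$ the matrix with $(i,i)$ entry $y_i$ for $i\le d_{\min}$ and zeros elsewhere. For $\bm W=(\bm W_1,\dots,\bm W_L)$, $\bm W_l\in\mathbb R^{d_l\times d_{l-1}}$, $G(\bm W)=\|\bm W_L\cdots\bm W_1-\sqrt\lambda\bm Y\|_F^2+\lambda\sum_l\|\bm W_l\|_F^2$, and $\|\nabla G(\bm W)\|_F=(\sum_l\|\nabla_{\bm W_l}G(\bm W)\|_F^2)^{1/2}$. (If $y_1=0$ and $L\ge3$, the second term in the minimum defining $\epsilon_0$ is interpreted as $+\infty$.) *)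

(* Defs.v *)
From HB Require Import structures.
From mathcomp Require Import all_boot all_order all_algebra.
From mathcomp Require Import all_classical all_reals all_analysis.
Set Implicit Arguments. Unset Strict Implicit. Unset Printing Implicit Defensive.
Import Order.TTheory GRing.Theory Num.Theory.
Import numFieldNormedType.Exports.
Local Open Scope ring_scope.

(* A weight family: W k : 'M_(d (k+1), d k); only the components k < L matter
   (W k is the paper's W_{k+1}). *)
Definition wfam (R : realType) (d : nat -> nat) := forall k : nat, 'M[R]_(d k.+1, d k).

Fixpoint prodW (R : realType) (d : nat -> nat) (W : wfam R d) (n : nat) : 'M[R]_(d n, d 0) :=
  match n with
  | 0 => 1%:M
  | n'.+1 => W n' *m prodW W n'
  end.

Definition frob2 (R : realType) m n (A : 'M[R]_(m, n)) : R :=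
  \sum_(i < m) \sum_(j < n) A i j ^+ 2.

Definition frobdot (R : realType) m n (A B : 'M[R]_(m, n)) : R :=
  \sum_(i < m) \sum_(j < n) A i j * B i j.

Definition Ymat (R : realType) (d : nat -> nat) (L : nat) (y : nat -> R) : 'M[R]_(d L, d 0) :=
  \matrix_(i < d L, j < d 0) (if (i : nat) == j then y i else 0).

Definition Gobj (R : realType) (d : nat -> nat) (L : nat) (lam : R) (y : nat -> R)
  (W : wfam R d) : R :=
  frob2 (prodW W L - Num.sqrt lam *: Ymat d L y) + lam * \sum_(l < L) frob2 (W l).

Definition wfam_add (R : realType) (d : nat -> nat) (W E : wfam R d) (t : R) : wfam R d :=
  fun k => W k + t *: E k.

Definition is_gradG (R : realType) (d : nat -> nat) (L : nat) (lam : R) (y : nat -> R)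
  (W D : wfam R d) : Prop :=
  forall E : wfam R d,
    is_derive (0 : R) (1 : R) (fun t : R => Gobj L lam y (wfam_add W E t))
              (\sum_(l < L) frobdot (D l) (E l)).

Definition famnorm (R : realType) (d : nat -> nat) (L : nat) (W : wfam R d) : R :=
  Num.sqrt (\sum_(l < L) frob2 (W l)).

Definition dmin (d : nat -> nat) (L : nat) : nat := minn (d 0) (d L).

Definition mu_const (R : realType) (d : nat -> nat) (L : nat) (lam : R) (y : nat -> R) : R :=
  \big[Num.min/lam]_(i < dmin d L | 0 < y i) `|lam - y i ^+ 2|.

Definition crit3 (R : realType) (L : nat) (yi : R) : R :=
  yi ^+ (2 * (L - 1)) *
  ((((L - 2)%:R / L%:R) `^ (L%:R / (2 * (L - 1))%:R)
    + ((L%:R / (L - 2)%:R) `^ ((L - 2)%:R / (2 * (L - 1))%:R))) ^- (2 * (L - 1))).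

Definition eps0 (R : realType) (d : nat -> nat) (L : nat) (lam : R) (y : nat -> R) : R :=
  if L == 2 then
    Num.sqrt (Num.sqrt lam * mu_const d L lam y / (2 * (Num.sqrt lam + y 0)))
  else if y 0 == 0 then (lam / 3) `^ (1 / (2 * L - 2)%:R)
  else Num.min ((lam / 3) `^ (1 / (2 * L - 2)%:R))
               ((Num.sqrt lam / (3 * y 0)) `^ (1 / (L - 2)%:R)).

Definition kappa0 (R : realType) (d : nat -> nat) (L : nat) (lam : R) (y : nat -> R) : R :=
  if L == 2 then 2 * (Num.sqrt lam + y 0) / (Num.sqrt lam * mu_const d L lam y)
  else 3 * Num.sqrt L%:R / (2 * lam).

(* Main.v *)
Require Import Defs.
From HB Require Import structures.
From mathcomp Require Import all_boot all_order all_algebra.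
From mathcomp Require Import all_classical all_reals all_analysis.
From mathcomp Require Import ring lra.
Import Order.TTheory GRing.Theory Num.Theory.
Local Open Scope ring_scope.



Lemma isd_ext {R : realType} (f g : R -> R) (df : R) :
  (forall t, f t = g t) -> is_derive (0:R) (1:R) f df -> is_derive (0:R) 1 g df.
Proof. by move=> fg; have -> : f = g by apply/funext. Qed.

Lemma isd_eq {R : realType} (f : R -> R) (df df' : R) :
  df = df' -> is_derive (0:R) (1:R) f df -> is_derive (0:R) 1 f df'.
Proof. by move=> ->. Qed.

Lemma isd_sum {R : realType} n (F : 'I_n -> R -> R) (dF : 'I_n -> R) :
  (forall i, is_derive (0:R) (1:R) (F i) (dF i)) ->
  is_derive (0:R) (1:R) (fun t => \sum_(i < n) F i t) (\sum_(i < n) dF i).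
Proof.
move=> h; have := is_derive_sum h.
move=> H.
have E : (\sum_(i<n) F i) = (fun t => \sum_(i<n) F i t).
  by apply/funext=> t; rewrite fct_sumE.
by rewrite -E.
Qed.


Lemma isd_mul {R : realType} {f g : R -> R} {df dg : R} :
  is_derive (0:R) (1:R) f df -> is_derive (0:R) (1:R) g dg ->
  is_derive (0:R) (1:R) (fun t => f t * g t) (f 0 * dg + g 0 * df).
Proof.
move=> hf hg; have := is_deriveM hf hg.
by apply: isd_ext.
Qed.

Lemma isd_cst {R : realType} (a : R) : is_derive (0:R) (1:R) (fun _ => a) 0.
Proof. exact: is_derive_cst. Qed.

Lemma isd_id {R : realType} : is_derive (0:R) (1:R) (fun t => t) 1.
Proof. exact: is_derive_id. Qed.

Lemma isd_add {R : realType} {f g : R -> R} {df dg : R} :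
  is_derive (0:R) (1:R) f df -> is_derive (0:R) (1:R) g dg ->
  is_derive (0:R) (1:R) (fun t => f t + g t) (df + dg).
Proof. by move=> hf hg; have := is_deriveD hf hg; apply: isd_ext. Qed.

Lemma isd_lin {R : realType} (a b : R) : is_derive (0:R) (1:R) (fun t => a + t * b) b.
Proof.
have := isd_add (isd_cst a) (isd_mul isd_id (isd_cst b)).
apply: isd_eq; rewrite ?mul0r ?mulr0 ?add0r ?mulr1 ?addr0 //=.
Qed.

Lemma isd_pow {R : realType} n : is_derive (0:R) (1:R) (fun t => (1 + t) ^+ n) n%:R.
Proof.
elim: n => [|n IH].
  apply: (@isd_eq R _ 0) => //.
  apply: (isd_ext (fun=> 1)).
  by move=> t; rewrite expr0.
have := isd_mul (isd_lin 1 1) IH.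
rewrite !mulr1 addr0 expr1n mul1r -natr1 addrC => H.
move: H; apply: isd_ext => t.
by rewrite mulr1 exprS.
Qed.

Lemma isd_frob2 {R : realType} m n (M : R -> 'M[R]_(m,n)) (M' : 'M[R]_(m,n)) :
  (forall i j, is_derive (0:R) (1:R) (fun t => M t i j) (M' i j)) ->
  is_derive (0:R) (1:R) (fun t => frob2 (M t)) (2 * frobdot (M 0) M').
Proof.
move=> h.
have H : forall i j, is_derive (0:R) (1:R) (fun t => M t i j ^+ 2) (2 * (M 0 i j * M' i j)).
  move=> i j; have := isd_mul (h i j) (h i j).
  rewrite -mulr2n mulr_natl; apply: isd_ext => t; by rewrite expr2.
have H2 := fun i => @isd_sum R _ (fun j t => M t i j ^+ 2) _ (H i).
have H3 := @isd_sum R _ (fun i t => \sum_j M t i j ^+ 2) _ H2.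
move: H3; rewrite /frob2 /frobdot mulr_sumr; apply: isd_eq.
by apply: eq_bigr => i _; rewrite mulr_sumr.
Qed.



Lemma amgm_pt {R : realType} (al f g : R) : 0 < al ->
  2 * `|f * g| <= al * f ^+ 2 + g ^+ 2 / al.
Proof.
move=> ha.
have key : 0 <= (al * `|f| - `|g|) ^+ 2 / al by apply: divr_ge0; [exact: sqr_ge0|exact: ltW].
have -> : al * f ^+ 2 + g ^+ 2 / al = (al * `|f| - `|g|) ^+ 2 / al + 2 * `|f * g|.
  rewrite normrM -[f ^+ 2](real_normK (num_real f)) -[g ^+ 2](real_normK (num_real g)).
  field; exact: lt0r_neq0.
by rewrite lerDr.
Qed.

Lemma opt_lemma {R : realType} (x a b : R) : 0 <= a -> 0 <= b ->
  (forall al, 0 < al -> 2 * x <= al * a + b / al) -> x <= Num.sqrt a * Num.sqrt b.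
Proof.
move=> a0 b0 H.
have sab : 0 <= Num.sqrt a * Num.sqrt b by rewrite mulr_ge0 ?sqrtr_ge0.
have [xle|xgt] := leP x 0; first exact: le_trans xle sab.
have [ap|] := ltP 0 a; last first.
  move=> ale; have a00 : a = 0 by apply/eqP; rewrite eq_le ale a0.
  have [bp|] := ltP 0 b.
    have := H (b / x) (divr_gt0 bp xgt); rewrite a00 mulr0 add0r.
    rewrite invf_div mulrCA divff ?mulr1; last exact: lt0r_neq0.
    lra.
  move=> ble; have b00 : b = 0 by apply/eqP; rewrite eq_le ble b0.
  have := H 1 ltr01; rewrite a00 b00 mulr0 mul0r addr0; lra.
have [bp|] := ltP 0 b; last first.
  move=> ble; have b00 : b = 0 by apply/eqP; rewrite eq_le ble b0.
  have := H (x / a) (divr_gt0 xgt ap); rewrite b00 mul0r addr0.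
  rewrite -mulrA mulVf ?mulr1; last exact: lt0r_neq0.
  lra.
have sa : 0 < Num.sqrt a by rewrite sqrtr_gt0.
have sb : 0 < Num.sqrt b by rewrite sqrtr_gt0.
have := H (Num.sqrt b / Num.sqrt a) (divr_gt0 sb sa).
have ea : a = Num.sqrt a ^+ 2 by rewrite sqr_sqrtr.
have eb : b = Num.sqrt b ^+ 2 by rewrite sqr_sqrtr.
rewrite [X in _ * X + _]ea [X in _ + X / _]eb.
have -> : Num.sqrt b / Num.sqrt a * Num.sqrt a ^+ 2 + Num.sqrt b ^+ 2 / (Num.sqrt b / Num.sqrt a)
   = 2 * (Num.sqrt a * Num.sqrt b).
  field; apply/andP; split; exact: lt0r_neq0.
lra.
Qed.

Lemma cs_abs {R : realType} {I : finType} (f g : I -> R) :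
  `|\sum_i f i * g i| <= Num.sqrt (\sum_i f i ^+ 2) * Num.sqrt (\sum_i g i ^+ 2).
Proof.
apply: le_trans (ler_norm_sum _ _ _) _.
apply: opt_lemma; [apply: sumr_ge0 => i _; exact: sqr_ge0|apply: sumr_ge0 => i _; exact: sqr_ge0|].
move=> al alp; rewrite mulr_sumr mulr_sumr mulr_suml -big_split /=.
by apply: ler_sum => i _; apply: amgm_pt.
Qed.

Lemma cs_sq {R : realType} {I : finType} (f g : I -> R) :
  (\sum_i f i * g i) ^+ 2 <= (\sum_i f i ^+ 2) * (\sum_i g i ^+ 2).
Proof.
rewrite -(real_normK (num_real _)).
have s0 : 0 <= Num.sqrt (\sum_i f i ^+ 2) * Num.sqrt (\sum_i g i ^+ 2) by rewrite mulr_ge0 ?sqrtr_ge0.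
have h1 : `|\sum_i f i * g i| ^+ 2 <= (Num.sqrt (\sum_i f i ^+ 2) * Num.sqrt (\sum_i g i ^+ 2)) ^+ 2.
  by rewrite ler_pXn2r ?nnegrE ?normr_ge0 // cs_abs.
by rewrite exprMn !sqr_sqrtr // in h1; apply: sumr_ge0 => i _; exact: sqr_ge0.
Qed.

Lemma frob2_ge0 {R : realType} {m n} (A : 'M[R]_(m,n)) : 0 <= frob2 A.
Proof. by apply: sumr_ge0 => i _; apply: sumr_ge0 => j _; exact: sqr_ge0. Qed.

Lemma frobdot_abs {R : realType} {m n} (A B : 'M[R]_(m,n)) :
  `|frobdot A B| <= Num.sqrt (frob2 A) * Num.sqrt (frob2 B).
Proof.
rewrite /frobdot /frob2 !pair_bigA /=.
exact: (cs_abs (fun p : 'I_m * 'I_n => A p.1 p.2) (fun p => B p.1 p.2)).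
Qed.

Lemma frob2_mul {R : realType} {m n p} (A : 'M[R]_(m,n)) (B : 'M[R]_(n,p)) :
  frob2 (A *m B) <= frob2 A * frob2 B.
Proof.
rewrite /frob2.
have step : \sum_(i < m) \sum_(j < p) (A *m B) i j ^+ 2 <=
   \sum_(i < m) \sum_(j < p) ((\sum_(k < n) A i k ^+ 2) * (\sum_(k < n) B k j ^+ 2)).
  apply: ler_sum => i _; apply: ler_sum => j _; rewrite mxE.
  exact: (cs_sq (fun k => A i k) (fun k => B k j)).
apply: le_trans step _.
rewrite mulr_suml; apply: ler_sum => i _; rewrite -mulr_sumr.
by rewrite [X in _ <= _ * X]exchange_big.
Qed.



Lemma frob2_dot {R : realType} {m n} (A : 'M[R]_(m,n)) : frob2 A = frobdot A A.
Proof. by apply: eq_bigr => i _; apply: eq_bigr => j _; rewrite expr2. Qed.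

Lemma frobdotC {R : realType} {m n} (A B : 'M[R]_(m,n)) : frobdot A B = frobdot B A.
Proof. by apply: eq_bigr => i _; apply: eq_bigr => j _; rewrite mulrC. Qed.

Lemma frobdotDl {R : realType} {m n} (A B C : 'M[R]_(m,n)) :
  frobdot (A + B) C = frobdot A C + frobdot B C.
Proof.
rewrite /frobdot -big_split; apply: eq_bigr => i _; rewrite -big_split.
by apply: eq_bigr => j _; rewrite !mxE mulrDl.
Qed.

Lemma frobdotZl {R : realType} {m n} (a : R) (A B : 'M[R]_(m,n)) :
  frobdot (a *: A) B = a * frobdot A B.
Proof.
rewrite /frobdot mulr_sumr; apply: eq_bigr => i _; rewrite mulr_sumr.
by apply: eq_bigr => j _; rewrite !mxE mulrA.
Qed.

Lemma frobdotNl {R : realType} {m n} (A B : 'M[R]_(m,n)) :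
  frobdot (- A) B = - frobdot A B.
Proof. by rewrite -scaleN1r frobdotZl mulN1r. Qed.

Lemma frobdotBl {R : realType} {m n} (A B C : 'M[R]_(m,n)) :
  frobdot (A - B) C = frobdot A C - frobdot B C.
Proof. by rewrite frobdotDl frobdotNl. Qed.

Lemma frobdotDr {R : realType} {m n} (A B C : 'M[R]_(m,n)) :
  frobdot C (A + B) = frobdot C A + frobdot C B.
Proof. by rewrite frobdotC frobdotDl !(frobdotC C). Qed.

Lemma frobdotZr {R : realType} {m n} (a : R) (A B : 'M[R]_(m,n)) :
  frobdot B (a *: A) = a * frobdot B A.
Proof. by rewrite frobdotC frobdotZl frobdotC. Qed.

Lemma frobdot_mulr {R : realType} {m n p} (Y : 'M[R]_(m,p)) (A : 'M[R]_(m,n)) (B : 'M[R]_(n,p)) :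
  frobdot Y (A *m B) = frobdot (Y *m B^T) A.
Proof.
rewrite /frobdot; apply: eq_bigr => i _.
under eq_bigr do rewrite !mxE mulr_sumr.
rewrite exchange_big /=; apply: eq_bigr => k _.
rewrite mxE mulr_suml; apply: eq_bigr => j _; rewrite !mxE; ring.
Qed.

Lemma frobdot_mull {R : realType} {m n p} (Y : 'M[R]_(m,p)) (A : 'M[R]_(m,n)) (B : 'M[R]_(n,p)) :
  frobdot Y (A *m B) = frobdot (A^T *m Y) B.
Proof.
rewrite /frobdot.
under eq_bigr do under eq_bigr do rewrite !mxE mulr_sumr.
under eq_bigr do rewrite exchange_big /=.
rewrite exchange_big /=; apply: eq_bigr => k _; rewrite exchange_big /=.
apply: eq_bigr => j _.
rewrite !mxE mulr_suml; apply: eq_bigr => i _; rewrite !mxE; ring.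
Qed.

Lemma frob2D {R : realType} {m n} (A B : 'M[R]_(m,n)) :
  frob2 (A + B) = frob2 A + 2 * frobdot A B + frob2 B.
Proof. by rewrite !frob2_dot frobdotDl !frobdotDr (frobdotC B A); ring. Qed.

Lemma frob2Z {R : realType} {m n} (a : R) (A : 'M[R]_(m,n)) : frob2 (a *: A) = a ^+ 2 * frob2 A.
Proof. by rewrite !frob2_dot frobdotZl frobdotZr; ring. Qed.

Lemma frob2N {R : realType} {m n} (A : 'M[R]_(m,n)) : frob2 (- A) = frob2 A.
Proof. by rewrite -scaleN1r frob2Z sqrrN expr1n mul1r. Qed.

Lemma sqrt_frob2D {R : realType} {m n} (A B : 'M[R]_(m,n)) :
  Num.sqrt (frob2 (A + B)) <= Num.sqrt (frob2 A) + Num.sqrt (frob2 B).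
Proof.
have hA := frob2_ge0 A; have hB := frob2_ge0 B.
have sA := sqrtr_ge0 (frob2 A); have sB := sqrtr_ge0 (frob2 B).
have h : frob2 (A + B) <= (Num.sqrt (frob2 A) + Num.sqrt (frob2 B)) ^+ 2.
  rewrite frob2D sqrrD !sqr_sqrtr //.
  have := frobdot_abs A B; have := ler_norm (frobdot A B); lra.
have := ler_sqrt (frob2 (A + B)) (sqr_ge0 (Num.sqrt (frob2 A) + Num.sqrt (frob2 B))).
by rewrite h sqrtr_sqr ger0_norm ?addr_ge0.

Qed.

Lemma sqrt_frob2_mul {R : realType} {m n p} (A : 'M[R]_(m,n)) (B : 'M[R]_(n,p)) :
  Num.sqrt (frob2 (A *m B)) <= Num.sqrt (frob2 A) * Num.sqrt (frob2 B).
Proof. by rewrite -sqrtrM ?frob2_ge0 // ler_sqrt ?mulr_ge0 ?frob2_ge0 // frob2_mul. Qed.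

Lemma fam_cs {R : realType} (d : nat -> nat) L (D E : wfam R d) :
  \sum_(l < L) frobdot (D l) (E l) <= famnorm L D * famnorm L E.
Proof.
apply: le_trans (_ : _ <= \sum_(l < L) Num.sqrt (frob2 (D l)) * Num.sqrt (frob2 (E l))) _.
  apply: ler_sum => l _; apply: le_trans (frobdot_abs _ _); exact: ler_norm.
apply: le_trans (ler_norm _) _.
have := cs_abs (fun l : 'I_L => Num.sqrt (frob2 (D l))) (fun l => Num.sqrt (frob2 (E l))).
rewrite /famnorm.
have e1 : \sum_(l < L) Num.sqrt (frob2 (D l)) ^+ 2 = \sum_(l < L) frob2 (D l).
  by apply: eq_bigr => l _; rewrite sqr_sqrtr // frob2_ge0.
have e2 : \sum_(l < L) Num.sqrt (frob2 (E l)) ^+ 2 = \sum_(l < L) frob2 (E l).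
  by apply: eq_bigr => l _; rewrite sqr_sqrtr // frob2_ge0.
by rewrite e1 e2.
Qed.



Lemma pick_sq {R : realType} n (j : nat) (F : 'I_n -> R) :
  (\sum_(k < n) (if (k : nat) == j then F k else 0)) ^+ 2 =
  \sum_(k < n) (if (k : nat) == j then F k ^+ 2 else 0).
Proof.
have [jn|jn] := ltnP j n.
  pose k0 := Ordinal jn.
  rewrite (bigD1 k0) // [in RHS](bigD1 k0) //= eqxx !big1 ?addr0 //.
    move=> k kk0; case: eqP => // kj; case/eqP: kk0; exact: val_inj.
  move=> k kk0; case: eqP => // kj; case/eqP: kk0; exact: val_inj.
rewrite !big1 ?expr0n //= => k _; case: eqP => // kj.
  by have := ltn_ord k; rewrite kj ltnNge jn.
by have := ltn_ord k; rewrite kj ltnNge jn.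
Qed.

Lemma count_le {R : realType} n (j : nat) (a : R) : 0 <= a ->
  \sum_(k < n) (if j == (k : nat) then a else 0) <= a.
Proof.
move=> a0; have [jn|jn] := ltnP j n.
  pose k0 := Ordinal jn.
  rewrite (bigD1 k0) //= eqxx big1 ?addr0 //.
  move=> k kk0; case: eqP => // kj; case/eqP: kk0; exact: val_inj.
rewrite big1 // => k _; case: eqP => // kj.
by have := ltn_ord k; rewrite -kj ltnNge jn.
Qed.

Lemma count_eq {R : realType} n (j : nat) (a : R) :
  \sum_(k < n) (if j == (k : nat) then a else 0) = if (j < n)%N then a else 0.
Proof.
have [jn|jn] := ltnP j n.
  pose k0 := Ordinal jn.
  rewrite (bigD1 k0) //= eqxx big1 ?addr0 //.
  move=> k kk0; case: eqP => // kj; case/eqP: kk0; exact: val_inj.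
rewrite big1 // => k _; case: eqP => // kj.
by have := ltn_ord k; rewrite -kj ltnNge jn.
Qed.

Definition Ym {R : realType} n1 n0 (y : nat -> R) : 'M[R]_(n1, n0) :=
  \matrix_(i < n1, j < n0) (if (i : nat) == j then y i else 0).

Lemma frob2_TY {R : realType} {n1 n0 m} (y : nat -> R) (A : 'M[R]_(n1, m)) (b : R) :
  (forall i, (i < minn n0 n1)%N -> y i ^+ 2 <= b) -> 0 <= b ->
  frob2 (A^T *m Ym n1 n0 y) <= b * frob2 A.
Proof.
move=> hy b0; rewrite /frob2.
have step : forall (k : 'I_m) (j : 'I_n0), (A^T *m Ym n1 n0 y) k j ^+ 2 <=
    \sum_(i < n1) (if (i : nat) == j then b * A i k ^+ 2 else 0).
  move=> k j; rewrite mxE.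
  under eq_bigr do rewrite !mxE.
  have -> : \sum_(i < n1) A i k * (if (i : nat) == j then y i else 0) =
            \sum_(i < n1) (if (i : nat) == j then A i k * y i else 0).
    by apply: eq_bigr => i _; case: eqP => _; rewrite ?mulr0.
  rewrite pick_sq; apply: ler_sum => i _; case: eqP => // ij.
  rewrite exprMn mulrC ler_wpM2r ?sqr_ge0 //; apply: hy.
  by rewrite leq_min ltn_ord ij ltn_ord.
have h2 : forall k : 'I_m, \sum_(j < n0) \sum_(i < n1)
      (if (i : nat) == j then b * A i k ^+ 2 else 0) <= \sum_(i < n1) b * A i k ^+ 2.
  move=> k; rewrite exchange_big /=; apply: ler_sum => i _.
  by apply: count_le; rewrite mulr_ge0 ?sqr_ge0.
apply: le_trans (_ : _ <= \sum_(k < m) \sum_(i < n1) b * A i k ^+ 2) _.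
  apply: ler_sum => k _; apply: le_trans (h2 k).
  by apply: ler_sum => j _; apply: step.
rewrite exchange_big mulr_sumr /=; apply: ler_sum => i _.
by rewrite mulr_sumr.
Qed.

Lemma frobdot_Ybound {R : realType} {n1 n0 m} (y : nat -> R) (A : 'M[R]_(n1, m))
   (Q : 'M[R]_(m, n0)) (yb : R) :
  (forall i, (i < minn n0 n1)%N -> `|y i| <= yb) -> 0 <= yb ->
  `|frobdot (A *m Q) (Ym n1 n0 y)| <= yb * (Num.sqrt (frob2 A) * Num.sqrt (frob2 Q)).
Proof.
move=> hy yb0.
rewrite frobdotC frobdot_mull.
apply: le_trans (frobdot_abs _ _) _.
rewrite mulrA ler_wpM2r ?sqrtr_ge0 //.
have h : frob2 (A^T *m Ym n1 n0 y) <= yb ^+ 2 * frob2 A.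
  apply: frob2_TY; last exact: sqr_ge0.
  move=> i hi; rewrite -(real_normK (num_real (y i))).
  by rewrite ler_pXn2r ?nnegrE ?normr_ge0 // hy.
apply: le_trans (_ : _ <= Num.sqrt (yb ^+ 2 * frob2 A)) _.
  by rewrite ler_sqrt // mulr_ge0 ?sqr_ge0 ?frob2_ge0.
by rewrite sqrtrM ?sqr_ge0 // sqrtr_sqr ger0_norm.
Qed.

Lemma prodW_bound {R : realType} {d : nat -> nat} (W : wfam R d) n : (0 < n)%N ->
  frob2 (prodW W n) <= \prod_(l < n) frob2 (W l).
Proof.
case: n => // n _; elim: n => [|n IH].
  by rewrite big_ord_recr big_ord0 /= mulmx1 mul1r.
rewrite big_ord_recr /= mulrC.
apply: le_trans (frob2_mul _ _) _.
by rewrite ler_wpM2l ?frob2_ge0.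
Qed.

Lemma prodW_scale {R : realType} {d : nat -> nat} (W : wfam R d) (t : R) n :
  prodW (wfam_add W W t) n = (1 + t) ^+ n *: prodW W n.
Proof.
elim: n => [|n IH] /=; first by rewrite expr0 scale1r.
rewrite IH /wfam_add -scalemxAr.
have -> : W n + t *: W n = (1 + t) *: W n by rewrite scalerDl scale1r.
by rewrite -scalemxAl scalerA -exprSr.
Qed.



Lemma isd_unique {R : realType} (f : R -> R) (a b : R) :
  is_derive (0:R) (1:R) f a -> is_derive (0:R) (1:R) f b -> a = b.
Proof. by move=> h1 h2; rewrite -(@derive_val _ _ _ _ _ _ _ h1) -(@derive_val _ _ _ _ _ _ _ h2). Qed.

Lemma isd_eqext {R : realType} (f g : R -> R) (df df' : R) :
  is_derive (0:R) (1:R) f df -> (forall t, f t = g t) -> df = df' -> is_derive (0:R) 1 g df'.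
Proof. by move=> h fg <-; move: h; apply: isd_ext. Qed.

Lemma dir_W {R : realType} {d : nat -> nat} (L : nat) (lam : R) (y : nat -> R) (W : wfam R d) :
  is_derive (0:R) (1:R) (fun t => Gobj L lam y (wfam_add W W t))
    (2 * L%:R * (frob2 (prodW W L) - Num.sqrt lam * frobdot (prodW W L) (Ymat d L y))
     + 2 * lam * \sum_(l < L) frob2 (W l)).
Proof.
set P := prodW W L; set Y := Ymat d L y; set c := Num.sqrt lam.
have h1 : is_derive (0:R) (1:R) (fun t => frob2 ((1 + t) ^+ L *: P - c *: Y))
   (2 * frobdot ((1 + 0) ^+ L *: P - c *: Y) (L%:R *: P)).
  apply: isd_frob2 => i j.
  have := isd_add (isd_mul (isd_pow (R:=R) L) (isd_cst (P i j))) (isd_cst (- (c * Y i j))).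
  move/isd_eqext; apply.
    by move=> t; rewrite !mxE.
  by rewrite !mxE mulr0 add0r addr0 mulrC.
have h2 : forall l : 'I_L, is_derive (0:R) (1:R) (fun t => frob2 (wfam_add W W t l))
     (2 * frobdot (W l + 0 *: W l) (W l)).
  move=> l; apply: (@isd_frob2 R _ _ (fun t => W l + t *: W l)) => i j.
  have := isd_lin (W l i j) (W l i j).
  move/isd_eqext; apply => //.
  by move=> t; rewrite !mxE.
have h3 := isd_mul (isd_cst lam) (@isd_sum R L (fun l t => frob2 (wfam_add W W t l)) _ h2).
have := isd_add h1 h3.
move/isd_eqext; apply.
  by move=> t; rewrite /Gobj prodW_scale.
rewrite ?mulr0 ?add0r ?addr0 expr1n scale1r.
have e0 : forall i : 'I_L, frobdot (W i + 0 *: W i) (W i) = frob2 (W i).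
  move=> i; rewrite frob2_dot; congr frobdot.
  by apply/matrixP => a b; rewrite !mxE mul0r addr0.
have e1 : \sum_(i < L) 2 * frobdot (W i + 0 *: W i) (W i) = 2 * \sum_(l < L) frob2 (W l).
  by rewrite mulr_sumr; apply: eq_bigr => i _; congr (_ * _); exact: e0.
rewrite e1 frobdotZr frobdotBl frobdotZl -frob2_dot (frobdotC Y P).
rewrite /c; ring.
Qed.



Lemma agm {R : realType} n (E : 'I_n -> R) : (forall i, 0 <= E i) ->
  \prod_(i < n) E i <= ((\sum_(i < n) E i) / n%:R) ^+ n.
Proof.
move=> h; have := leif_AGM (A := 'I_n) (E := E) (fun i _ => h i).
by rewrite card_ord => -[le _].
Qed.

Lemma sq_le {R : realType} (x z : R) : 0 <= z -> x ^+ 2 <= z ^+ 2 -> x <= z.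
Proof.
move=> z0 h; have [x0|x0] := leP x 0; first exact: le_trans x0 z0.
by move: h; rewrite ler_pXn2r // ?nnegrE ?ltW.
Qed.

Lemma LsqrtPi {R : realType} L (N Pi : R) : (2 <= L)%N -> 0 <= Pi -> 0 <= N ->
  Pi <= (N / L%:R) ^+ L -> L%:R * Num.sqrt Pi <= Num.sqrt N ^+ L.
Proof.
move=> L2 P0 N0 h.
apply: sq_le; first by rewrite exprn_ge0 ?sqrtr_ge0.
rewrite exprMn sqr_sqrtr // -exprM mulnC exprM sqr_sqrtr //.
have Lp : 0 < L%:R :> R by rewrite ltr0n; apply: leq_trans L2.
apply: le_trans (_ : L%:R ^+ 2 * (N / L%:R) ^+ L <= _).
  by rewrite ler_wpM2l ?sqr_ge0.
rewrite expr_div_n.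
have -> : L%:R ^+ L = L%:R ^+ 2 * L%:R ^+ (L - 2) :> R by rewrite -exprD subnKC.
set a := L%:R ^+ (L - 2) : R.
have a1 : 1 <= a by rewrite /a exprn_ege1 // ler1n; apply: leq_trans L2.
have a0 : 0 < a by apply: lt_le_trans a1.
have -> : L%:R ^+ 2 * (N ^+ L / (L%:R ^+ 2 * a)) = N ^+ L / a.
  by field; rewrite !lt0r_neq0.
rewrite ler_pdivrMr //.
by rewrite ler_peMr ?exprn_ge0.
Qed.

Lemma pow_from_root {R : realType} (s x : R) k : (0 < k)%N -> 0 <= s -> 0 <= x ->
  s <= x `^ (1 / k%:R) -> s ^+ k <= x.
Proof.
move=> k0 s0 x0 h.
rewrite -powR_mulrn //.
have := ge0_ler_powR (r := k%:R) (ler0n _ _) s0 (powR_ge0 _ _) h.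
rewrite -powRrM mul1r mulVf ?powRr1 //.
by rewrite pnatr_eq0 -lt0n.
Qed.

Lemma fdot_PY_bound {R : realType} {d : nat -> nat} (W : wfam R d) n (y : nat -> R) (yb : R) :
  (0 < n)%N ->
  (forall i, (i < minn (d 0) (d n.+1))%N -> `|y i| <= yb) -> 0 <= yb ->
  `|frobdot (prodW W n.+1) (Ymat d n.+1 y)| <= yb * Num.sqrt (\prod_(l < n.+1) frob2 (W l)).
Proof.
move=> n0 hy yb0.
have := @frobdot_Ybound R (d n.+1) (d 0) (d n) y (W n) (prodW W n) yb hy yb0.
move=> h; apply: le_trans h _.
rewrite ler_wpM2l // -sqrtrM ?frob2_ge0 // ler_sqrt; last first.
  by apply: prodr_ge0 => l _; apply: frob2_ge0.
rewrite big_ord_recr /= mulrC ler_wpM2r ?frob2_ge0 //.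
exact: prodW_bound.
Qed.

Lemma main3 {R : realType} (L : nat) (d : nat -> nat) (lam : R) (y : nat -> R) (W D : wfam R d) :
  (3 <= L)%N -> (0 < d 0)%N -> (0 < d L)%N -> 0 < lam ->
  (forall i, (i < dmin d L)%N -> 0 <= y i /\ y i <= y 0) ->
  is_gradG L lam y W D ->
  y 0 * famnorm L W ^+ (L - 2) <= Num.sqrt lam / 3 ->
  famnorm L W <= 3 * Num.sqrt L%:R / (2 * lam) * famnorm L D.
Proof.
case: L => // L L3 d0 dL lp hy hg hs.
set c := Num.sqrt lam.
have c0 : 0 < c by rewrite sqrtr_gt0.
have cc : c ^+ 2 = lam by rewrite sqr_sqrtr // ltW.
set N := \sum_(l < L.+1) frob2 (W l).
have N0 : 0 <= N by apply: sumr_ge0 => l _; apply: frob2_ge0.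
set s := famnorm L.+1 W.
have sN : s ^+ 2 = N by rewrite /s /famnorm sqr_sqrtr.
have s0 : 0 <= s by apply: sqrtr_ge0.
have dm : (0 < dmin d L.+1)%N by rewrite /dmin leq_min d0 dL.
have y00 : 0 <= y 0 by case: (hy 0 dm).
have hyb : forall i, (i < minn (d 0) (d L.+1))%N -> `|y i| <= y 0.
  by move=> i hi; case: (hy i hi) => h1 h2; rewrite ger0_norm.
have L0 : (0 < L)%N by rewrite lt0n; apply/eqP => L00; rewrite L00 in L3.
have hB := @fdot_PY_bound R d W L y (y 0) L0 hyb y00.
set B := `|frobdot (prodW W L.+1) (Ymat d L.+1 y)| in hB.
set Pi := \prod_(l < L.+1) frob2 (W l) in hB.
have Pi0 : 0 <= Pi by apply: prodr_ge0 => l _; apply: frob2_ge0.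
have hPi : Pi <= (N / L.+1%:R) ^+ L.+1 by apply: agm => l; apply: frob2_ge0.
have hLP := @LsqrtPi R L.+1 N Pi (ltnW L3) Pi0 N0 hPi.
have h2 : L.+1%:R * B <= y 0 * s ^+ L.+1.
  apply: le_trans (_ : L.+1%:R * (y 0 * Num.sqrt Pi) <= _).
    by rewrite ler_wpM2l.
  by rewrite mulrCA ler_wpM2l.
have h3 : y 0 * s ^+ L.+1 <= c / 3 * N.
  have -> : s ^+ L.+1 = s ^+ (L.+1 - 2) * s ^+ 2.
    by rewrite -exprD subnK.
  by rewrite mulrA sN ler_wpM2r.
have hS := @isd_unique R _ _ _ (hg W) (dir_W L.+1 lam y W).
have hcs := @fam_cs R d L.+1 D W.
rewrite hS -/N -/c -/s in hcs.
set fd := frobdot (prodW W L.+1) (Ymat d L.+1 y) in hcs.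
set fP := frob2 (prodW W L.+1) in hcs.
have fP0 : 0 <= fP by apply: frob2_ge0.
have F1 : L.+1%:R * fd <= c / 3 * N.
  apply: le_trans h3; apply: le_trans h2; rewrite ler_wpM2l //; exact: ler_norm.
have F2 : c * (L.+1%:R * fd) <= c * (c / 3 * N) by rewrite ler_wpM2l // ltW.
have F3 : c * (c / 3 * N) = lam * N / 3 by rewrite -cc; field.
have F4 : 0 <= L.+1%:R * fP by rewrite mulr_ge0.
have E1 : 2 * L.+1%:R * (fP - c * fd) + 2 * lam * N =
   2 * (L.+1%:R * fP) - 2 * (c * (L.+1%:R * fd)) + 2 * lam * N by ring.
rewrite E1 in hcs.
have key : 4 / 3 * lam * N <= famnorm L.+1 D * s by lra.
set nD := famnorm L.+1 D in key *.
have nD0 : 0 <= nD by apply: sqrtr_ge0.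
have sL : 1 <= Num.sqrt L.+1%:R :> R.
  have : Num.sqrt 1 <= Num.sqrt L.+1%:R :> R by rewrite ler_sqrt // ler1n.
  by rewrite sqrtr1.
have K0 : 0 <= 3 * Num.sqrt L.+1%:R / (2 * lam).
  by rewrite divr_ge0 ?mulr_ge0 ?sqrtr_ge0 // ltW.
have [sz|sp] := eqVneq s 0.
  by rewrite sz mulr_ge0.
have sp' : 0 < s by rewrite lt_neqAle eq_sym sp s0.
have k2 : 4 / 3 * lam * s <= nD.
  rewrite -(ler_pM2r sp').
  have -> : 4 / 3 * lam * s * s = 4 / 3 * lam * N by rewrite -sN expr2 mulrA.
  lra.
have k3 : 2 * lam * s <= 3 * Num.sqrt L.+1%:R * nD.
  have : nD <= Num.sqrt L.+1%:R * nD by rewrite ler_peMl.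
  lra.
rewrite mulrAC ler_pdivlMr ?mulr_gt0 //.
lra.
Qed.



Lemma sum2_lin {R : realType} {I J : finType} (f g h : I -> J -> R) (al be ga : R) :
  \sum_i \sum_j f i j * (al - be * g i j + ga * h i j) =
  al * (\sum_i \sum_j f i j) - be * (\sum_i \sum_j f i j * g i j)
   + ga * (\sum_i \sum_j f i j * h i j).
Proof.
rewrite !mulr_sumr -sumrB -big_split /=; apply: eq_bigr => i _.
rewrite !mulr_sumr -sumrB -big_split /=; apply: eq_bigr => j _; ring.
Qed.

Lemma Ym_ge0 {R : realType} {n2 n0} (y : nat -> R) (i : 'I_n2) (j : 'I_n0) :
  (forall i, (i < minn n0 n2)%N -> 0 <= y i) -> 0 <= Ym n2 n0 y i j.
Proof.
move=> hy; rewrite mxE; case: eqP => // ij; apply: hy.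
by rewrite leq_min ltn_ord ij ltn_ord.
Qed.

Lemma crossC {R : realType} {n2 n1 n0} (y : nat -> R) (X : 'M[R]_(n1,n0)) (Z : 'M[R]_(n2,n1)) :
  (forall i, (i < minn n0 n2)%N -> 0 <= y i) ->
  2 * frobdot (Z *m X) (Ym n2 n0 y) <=
   \sum_(i < n2) \sum_(a < n1) Z i a ^+ 2 * (\sum_(j < n0) Ym n2 n0 y i j)
   + \sum_(a < n1) \sum_(j < n0) X a j ^+ 2 * (\sum_(i < n2) Ym n2 n0 y i j).
Proof.
move=> hy; set Y := Ym n2 n0 y.
have step : 2 * frobdot (Z *m X) Y <=
   \sum_(i < n2) \sum_(j < n0) \sum_(a < n1) (Z i a ^+ 2 * Y i j + X a j ^+ 2 * Y i j).
  rewrite /frobdot mulr_sumr; apply: ler_sum => i _; rewrite mulr_sumr.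
  apply: ler_sum => j _; rewrite mxE mulr_suml mulr_sumr; apply: ler_sum => a _.
  have Y0 : 0 <= Y i j by apply: Ym_ge0.
  have : 0 <= (Z i a - X a j) ^+ 2 * Y i j by rewrite mulr_ge0 ?sqr_ge0.
  move=> h; rewrite -mulrDl.
  have -> : Z i a ^+ 2 + X a j ^+ 2 = (Z i a - X a j) ^+ 2 + 2 * (Z i a * X a j) by ring.
  rewrite mulrDl; lra.
apply: le_trans step _; rewrite le_eqVlt; apply/orP; left; apply/eqP.
have e1 : forall i : 'I_n2, \sum_(j < n0) \sum_(a < n1) (Z i a ^+ 2 * Y i j + X a j ^+ 2 * Y i j) =
    \sum_(a < n1) Z i a ^+ 2 * (\sum_(j < n0) Y i j) + \sum_(j < n0) \sum_(a < n1) X a j ^+ 2 * Y i j.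
  move=> i; rewrite exchange_big /=.
  under eq_bigr do rewrite big_split /=.
  rewrite big_split /=; congr (_ + _); last by rewrite exchange_big.
  by apply: eq_bigr => a _; rewrite mulr_sumr.
under eq_bigr do rewrite e1.
rewrite big_split /=; congr (_ + _).
rewrite exchange_big /=.
under eq_bigr do rewrite exchange_big /=.
rewrite exchange_big /=; apply: eq_bigr => a _; apply: eq_bigr => j _.
by rewrite mulr_sumr.
Qed.

Lemma fZTY {R : realType} {n2 n1 n0} (y : nat -> R) (Z : 'M[R]_(n2,n1)) :
  frob2 (Z^T *m Ym n2 n0 y) =
  \sum_(i < n2) \sum_(a < n1) Z i a ^+ 2 * (\sum_(j < n0) Ym n2 n0 y i j ^+ 2).
Proof.
set Y := Ym n2 n0 y; rewrite /frob2.
have e : forall (a : 'I_n1) (j : 'I_n0), (Z^T *m Y) a j ^+ 2 =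
    \sum_(k < n2) Z k a ^+ 2 * Y k j ^+ 2.
  move=> a j; rewrite mxE.
  have -> : \sum_(k < n2) Z^T a k * Y k j =
            \sum_(k < n2) (if (k : nat) == j then Z k a * y k else 0).
    by apply: eq_bigr => k _; rewrite !mxE; case: eqP => _; rewrite ?mulr0.
  rewrite pick_sq; apply: eq_bigr => k _; rewrite !mxE.
  by case: eqP => _; rewrite ?expr0n ?mulr0 //= exprMn.
under eq_bigr do under eq_bigr do rewrite e.
under eq_bigr do rewrite exchange_big /=.
rewrite exchange_big /=; apply: eq_bigr => i _; apply: eq_bigr => a _.
by rewrite mulr_sumr.
Qed.

Lemma fYXT {R : realType} {n2 n1 n0} (y : nat -> R) (X : 'M[R]_(n1,n0)) :
  frob2 (Ym n2 n0 y *m X^T) =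
  \sum_(a < n1) \sum_(j < n0) X a j ^+ 2 * (\sum_(i < n2) Ym n2 n0 y i j ^+ 2).
Proof.
set Y := Ym n2 n0 y; rewrite /frob2.
have e : forall (i : 'I_n2) (a : 'I_n1), (Y *m X^T) i a ^+ 2 =
    \sum_(k < n0) X a k ^+ 2 * Y i k ^+ 2.
  move=> i a; rewrite mxE.
  have -> : \sum_(k < n0) Y i k * X^T k a =
            \sum_(k < n0) (if (k : nat) == i then X a k * y i else 0).
    apply: eq_bigr => k _; rewrite !mxE eq_sym.
    by case: eqP => _; rewrite ?mul0r // mulrC.
  rewrite pick_sq; apply: eq_bigr => k _; rewrite !mxE eq_sym.
  by case: eqP => _; rewrite ?expr0n ?mulr0 //= exprMn.
under eq_bigr do under eq_bigr do rewrite e.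
rewrite exchange_big /=.
under eq_bigr do rewrite exchange_big /=.
apply: eq_bigr => a _; apply: eq_bigr => j _.
by rewrite mulr_sumr.
Qed.

Lemma rowsum_Y {R : realType} {n2 n0} (y : nat -> R) (i : 'I_n2) :
  \sum_(j < n0) Ym n2 n0 y i j = (if (i < n0)%N then y i else 0) /\
  \sum_(j < n0) Ym n2 n0 y i j ^+ 2 = (if (i < n0)%N then y i ^+ 2 else 0).
Proof.
split.
  by under eq_bigr do rewrite mxE; rewrite count_eq.
under eq_bigr do rewrite mxE (fun_if (fun x => x ^+ 2)) expr0n /=.
by rewrite count_eq.
Qed.

Lemma colsum_Y {R : realType} {n2 n0} (y : nat -> R) (j : 'I_n0) :
  \sum_(i < n2) Ym n2 n0 y i j = (if (j < n2)%N then y j else 0) /\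
  \sum_(i < n2) Ym n2 n0 y i j ^+ 2 = (if (j < n2)%N then y j ^+ 2 else 0).
Proof.
have e : forall i : 'I_n2, Ym n2 n0 y i j = if (j : nat) == i then y j else 0.
  by move=> i; rewrite mxE eq_sym; case: eqP => // ->.
split.
  by under eq_bigr do rewrite e; rewrite count_eq.
under eq_bigr do rewrite e (fun_if (fun x => x ^+ 2)) expr0n /=.
by rewrite count_eq.
Qed.

Lemma frob2B {R : realType} {m n} (A B : 'M[R]_(m,n)) :
  frob2 (A - B) = frob2 A - 2 * frobdot A B + frob2 B.
Proof. by rewrite frob2D frob2N frobdotC frobdotNl frobdotC; ring. Qed.

Lemma quad_bound {R : realType} {n2 n1 n0} (y : nat -> R) (X : 'M[R]_(n1,n0)) (Z : 'M[R]_(n2,n1))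
   (c lam m : R) :
  (forall i, (i < minn n0 n2)%N -> 0 <= y i) -> 0 <= c -> 0 <= lam ->
  m ^+ 2 <= lam ^+ 2 ->
  (forall i, (i < minn n0 n2)%N -> m ^+ 2 <= (lam - c * y i) ^+ 2) ->
  m ^+ 2 * (frob2 X + frob2 Z) <=
  frob2 (lam *: X - c *: (Z^T *m Ym n2 n0 y)) + frob2 (lam *: Z - c *: (Ym n2 n0 y *m X^T)).
Proof.
move=> hy c0 l0 hm hmi.
set Y := Ym n2 n0 y.
set C := frobdot (Z *m X) Y.
have eA : frob2 (lam *: X - c *: (Z^T *m Y)) =
    lam ^+ 2 * frob2 X - 2 * (lam * c) * C + c ^+ 2 * frob2 (Z^T *m Y).
  rewrite frob2B !frob2Z frobdotZl frobdotZr frobdot_mull trmxK /C; ring.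
have eB : frob2 (lam *: Z - c *: (Y *m X^T)) =
    lam ^+ 2 * frob2 Z - 2 * (lam * c) * C + c ^+ 2 * frob2 (Y *m X^T).
  rewrite frob2B !frob2Z frobdotZl frobdotZr frobdot_mulr trmxK.
  rewrite /C; ring.
rewrite eA eB fZTY fYXT.
have hC := crossC y X Z hy; rewrite -/Y -/C in hC.
have lc0 : 0 <= lam * c by rewrite mulr_ge0.
have hC' := ler_wpM2l lc0 hC.
pose TZ := \sum_(i < n2) \sum_(a < n1) Z i a ^+ 2 *
   (lam ^+ 2 - m ^+ 2 - (2 * (lam * c)) * (\sum_(j < n0) Y i j) + c ^+ 2 * (\sum_(j < n0) Y i j ^+ 2)).
pose TX := \sum_(a < n1) \sum_(j < n0) X a j ^+ 2 *
   (lam ^+ 2 - m ^+ 2 - (2 * (lam * c)) * (\sum_(i < n2) Y i j) + c ^+ 2 * (\sum_(i < n2) Y i j ^+ 2)).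
have TZ0 : 0 <= TZ.
  apply: sumr_ge0 => i _; apply: sumr_ge0 => a _; apply: mulr_ge0; first exact: sqr_ge0.
  have [e1 e2] := rowsum_Y (n0 := n0) y i; rewrite /Y e1 e2.
  case: ifP => hi.
    have := hmi i; rewrite leq_min hi ltn_ord => /(_ isT).
    have -> : (lam - c * y i) ^+ 2 = lam ^+ 2 - 2 * (lam * c) * y i + c ^+ 2 * y i ^+ 2 by ring.
    lra.
  rewrite mulr0 mulr0 subr0 addr0; lra.
have TX0 : 0 <= TX.
  apply: sumr_ge0 => a _; apply: sumr_ge0 => j _; apply: mulr_ge0; first exact: sqr_ge0.
  have [e1 e2] := colsum_Y (n2 := n2) y j; rewrite /Y e1 e2.
  case: ifP => hj.
    have := hmi j; rewrite leq_min hj ltn_ord => /(_ isT).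
    have -> : (lam - c * y j) ^+ 2 = lam ^+ 2 - 2 * (lam * c) * y j + c ^+ 2 * y j ^+ 2 by ring.
    lra.
  rewrite mulr0 mulr0 subr0 addr0; lra.
have eTZ := sum2_lin (fun (i : 'I_n2) (a : 'I_n1) => Z i a ^+ 2) (fun i a => \sum_(j < n0) Y i j)
   (fun i a => \sum_(j < n0) Y i j ^+ 2) (lam ^+ 2 - m ^+ 2) (2 * (lam * c)) (c ^+ 2).
have eTX := sum2_lin (fun (a : 'I_n1) (j : 'I_n0) => X a j ^+ 2) (fun a j => \sum_(i < n2) Y i j)
   (fun a j => \sum_(i < n2) Y i j ^+ 2) (lam ^+ 2 - m ^+ 2) (2 * (lam * c)) (c ^+ 2).
rewrite -/TZ /= in eTZ; rewrite -/TX /= in eTX.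
rewrite /frob2 in eTZ eTX *.
lra.
Qed.



Lemma dir_E2 {R : realType} {d : nat -> nat} (lam : R) (y : nat -> R) (W E : wfam R d) :
  is_derive (0:R) (1:R) (fun t => Gobj 2 lam y (wfam_add W E t))
    (2 * frobdot (W 1%N *m W 0%N - Num.sqrt lam *: Ymat d 2 y) (E 1%N *m W 0%N + W 1%N *m E 0%N)
     + 2 * lam * (frobdot (W 0%N) (E 0%N) + frobdot (W 1%N) (E 1%N))).
Proof.
set Y := Ymat d 2 y; set c := Num.sqrt lam.
have h1 : is_derive (0:R) (1:R)
    (fun t => frob2 ((W 1%N + t *: E 1%N) *m (W 0%N + t *: E 0%N) - c *: Y))
    (2 * frobdot ((W 1%N + 0 *: E 1%N) *m (W 0%N + 0 *: E 0%N) - c *: Y)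
                 (E 1%N *m W 0%N + W 1%N *m E 0%N)).
  apply: isd_frob2 => i j.
  have hk : forall k, is_derive (0:R) (1:R)
      (fun t => (W 1%N i k + t * E 1%N i k) * (W 0%N k j + t * E 0%N k j))
      ((W 1%N i k + 0 * E 1%N i k) * E 0%N k j + (W 0%N k j + 0 * E 0%N k j) * E 1%N i k).
    by move=> k; apply: isd_mul; apply: isd_lin.
  have := isd_add (@isd_sum R _ (fun k t => (W 1%N i k + t * E 1%N i k) * (W 0%N k j + t * E 0%N k j)) _ hk)
                  (isd_cst (- (c * Y i j))).
  move/isd_eqext; apply.
    by move=> t; rewrite !mxE; congr (_ + _); apply: eq_bigr => k _; rewrite !mxE.
  rewrite addr0 !mxE -big_split /=; apply: eq_bigr => k _; ring.
have h2 : forall l : 'I_2, is_derive (0:R) (1:R) (fun t => frob2 (wfam_add W E t l))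
     (2 * frobdot (W l + 0 *: E l) (E l)).
  move=> l; apply: (@isd_frob2 R _ _ (fun t => W l + t *: E l)) => i j.
  have := isd_lin (W l i j) (E l i j).
  move/isd_eqext; apply => //.
  by move=> t; rewrite !mxE.
have h3 := isd_mul (isd_cst lam) (@isd_sum R 2 (fun l t => frob2 (wfam_add W E t l)) _ h2).
have := isd_add h1 h3.
move/isd_eqext; apply.
  by move=> t; rewrite /Gobj /= mulmx1.
have e0 : forall (m n : nat) (A B : 'M[R]_(m, n)), A + 0 *: B = A.
  by move=> m n A B; apply/matrixP => a b; rewrite !mxE mul0r addr0.
rewrite !e0 mulr0 addr0 !big_ord_recr big_ord0 /= add0r !e0; ring.
Qed.



Lemma mu_ge0 {R : realType} d L (lam : R) y : 0 <= lam -> 0 <= mu_const d L lam y.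
Proof.
move=> l0; rewrite /mu_const; apply: (big_ind (fun x => 0 <= x)) => //.
  by move=> x z hx hz; rewrite le_min hx hz.
Qed.

Lemma mu_le_lam {R : realType} d L (lam : R) y : mu_const d L lam y <= lam.
Proof.
rewrite /mu_const; apply: (big_rec (fun x => x <= lam)) => //.
by move=> i x _ hx; rewrite ge_min hx orbT.
Qed.

Lemma mu_le_i {R : realType} d L (lam : R) y i : (i < dmin d L)%N -> 0 < y i ->
  mu_const d L lam y <= `|lam - y i ^+ 2|.
Proof.
move=> hi yi; rewrite /mu_const (bigD1 (Ordinal hi)) //=.
by rewrite ge_min lexx.
Qed.

Lemma final2 {R : realType} (s a0 a1 e0 e1 nD e S : R) :
  0 <= a0 -> 0 <= a1 -> 0 <= e0 -> 0 <= e1 -> 0 <= nD -> 0 <= e -> 0 <= s ->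
  s ^+ 2 = a0 ^+ 2 + a1 ^+ 2 ->
  S <= nD * Num.sqrt (e0 ^+ 2 + e1 ^+ 2) ->
  2 * (e0 ^+ 2 + e1 ^+ 2) - 2 * (a0 * a1) * (e1 * a0 + a1 * e0) <= S ->
  e ^+ 2 * s ^+ 2 <= e0 ^+ 2 + e1 ^+ 2 -> s ^+ 2 <= e -> e * s <= nD.
Proof.
move=> ha0 ha1 he0 he1 hnD he hs sE hS1 hS2 hq hse.
set q := e0 ^+ 2 + e1 ^+ 2 in hS1 hS2 hq.
have q0 : 0 <= q by rewrite addr_ge0 ?sqr_ge0.
set eps := Num.sqrt q in hS1.
have eps0 : 0 <= eps by apply: sqrtr_ge0.
have epsq : eps ^+ 2 = q by rewrite sqr_sqrtr.
have h1 : e1 * a0 + a1 * e0 <= s * eps.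
  apply: sq_le; first by rewrite mulr_ge0.
  rewrite exprMn sE epsq /q.
  have : 0 <= (a0 * e0 - a1 * e1) ^+ 2 by apply: sqr_ge0.
  move=> h; have -> : (a0 ^+ 2 + a1 ^+ 2) * (e0 ^+ 2 + e1 ^+ 2) =
     (e1 * a0 + a1 * e0) ^+ 2 + (a0 * e0 - a1 * e1) ^+ 2 by ring.
  lra.
have h2 : 2 * (a0 * a1) <= s ^+ 2.
  rewrite sE; have : 0 <= (a0 - a1) ^+ 2 by apply: sqr_ge0.
  have -> : (a0 - a1) ^+ 2 = a0 ^+ 2 + a1 ^+ 2 - 2 * (a0 * a1) by ring.
  lra.
have h3 : e * s <= eps.
  apply: sq_le => //; rewrite exprMn epsq //.
have h4 : 2 * (a0 * a1) * (e1 * a0 + a1 * e0) <= s ^+ 2 * (s * eps).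
  apply: ler_pM => //; by rewrite ?mulr_ge0 ?addr_ge0 ?mulr_ge0.
have h5 : s ^+ 2 * s <= e * s by rewrite ler_wpM2r.
have [ez|ep] := eqVneq eps 0.
  by move: h3; rewrite ez => h; apply: le_trans h hnD.
have epsp : 0 < eps by rewrite lt_neqAle eq_sym ep eps0.
have h6 : 0 <= eps * (nD - 2 * eps + s ^+ 2 * s).
  have -> : eps * (nD - 2 * eps + s ^+ 2 * s) = nD * eps - 2 * eps ^+ 2 + s ^+ 2 * (s * eps) by ring.
  rewrite epsq; lra.
rewrite pmulr_rge0 // in h6.
lra.
Qed.

Lemma main2 {R : realType} (d : nat -> nat) (lam : R) (y : nat -> R) (W D : wfam R d) :
  (0 < d 0)%N -> (0 < d 2)%N -> 0 < lam ->
  (forall i, (i < dmin d 2)%N -> 0 <= y i /\ y i <= y 0) ->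
  is_gradG 2 lam y W D ->
  famnorm 2 W <= eps0 d 2 lam y ->
  famnorm 2 W <= kappa0 d 2 lam y * famnorm 2 D.
Proof.
move=> d0 d2 lp hy hg he.
rewrite /eps0 /= in he; rewrite /kappa0 /=.
set c := Num.sqrt lam in he *.
have c0 : 0 < c by rewrite sqrtr_gt0.
have cc : c ^+ 2 = lam by rewrite sqr_sqrtr // ltW.
set mu := mu_const d 2 lam y in he *.
have mu0 : 0 <= mu by apply: mu_ge0; apply: ltW.
have mul : mu <= lam by apply: mu_le_lam.
have dm : (0 < dmin d 2)%N by rewrite /dmin leq_min d0 d2.
have y00 : 0 <= y 0 by case: (hy 0 dm).
have cy0 : 0 < 2 * (c + y 0) by rewrite mulr_gt0 // ltr_wpDr.
set e := c * mu / (2 * (c + y 0)) in he.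
have e0 : 0 <= e by apply: divr_ge0; [apply: mulr_ge0; [exact: ltW|exact: mu0] | exact: ltW].
set s := famnorm 2 W in he *.
have s0 : 0 <= s by apply: sqrtr_ge0.
have hse : s ^+ 2 <= e.
  have h := ler_pM s0 s0 he he.
  rewrite expr2; apply: (le_trans h); by rewrite -expr2 sqr_sqrtr.
have eb1 : e <= lam.
  rewrite /e ler_pdivrMr //.
  have : c * mu <= c * lam by rewrite ler_wpM2l // ltW.
  have : 0 <= lam * (c + 2 * y 0) by rewrite mulr_ge0 ?addr_ge0 ?mulr_ge0 // ltW.
  lra.
have eb2 : forall i, (i < dmin d 2)%N -> 0 < y i -> e <= `|lam - c * y i|.
  move=> i hi yp; have [yi0 yi1] := hy i hi.
  have hm := @mu_le_i R d 2 lam y i hi yp; rewrite -/mu in hm.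
  have f1 : `|lam - y i ^+ 2| = `|c - y i| * (c + y i).
    by rewrite -cc -(ger0_norm (addr_ge0 (ltW c0) yi0)) -normrM; congr `|_|; ring.
  have f2 : `|lam - c * y i| = c * `|c - y i|.
    by rewrite -cc -(ger0_norm (ltW c0)) -normrM; congr `|_|; rewrite ger0_norm ?(ltW c0) //; ring.
  rewrite f2 /e ler_pdivrMr //.
  have na : 0 <= `|c - y i| by apply: normr_ge0.
  have g1 : c * mu <= c * (`|c - y i| * (c + y i)) by rewrite ler_wpM2l ?(ltW c0) // -f1.
  have g2 : c * (`|c - y i| * (c + y i)) <= c * (`|c - y i| * (c + y 0)).
    by rewrite ler_wpM2l ?(ltW c0) // ler_wpM2l // lerD2l.
  have g3 : 0 <= c * (`|c - y i| * (c + y 0)) by rewrite !mulr_ge0 ?addr_ge0 // ltW.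
  lra.
have hyq : forall i, (i < minn (d 0) (d 2))%N -> e ^+ 2 <= (lam - c * y i) ^+ 2.
  move=> i hi; have [yi0 _] := hy i hi.
  have [yz|yp] := eqVneq (y i) 0.
    by rewrite yz mulr0 subr0 ler_pXn2r ?nnegrE // ltW.
  have ypos : 0 < y i by rewrite lt_neqAle eq_sym yp yi0.
  rewrite -(real_normK (num_real (lam - c * y i))) ler_pXn2r ?nnegrE ?normr_ge0 //.
  exact: eb2.
set Y := Ymat d 2 y.
set X := W 0%N; set Z := W 1%N.
pose E0 := lam *: X - c *: (Z^T *m Y).
pose E1 := lam *: Z - c *: (Y *m X^T).
pose Ew : wfam R d := fun k => match k as k0 return 'M[R]_(d k0.+1, d k0) with
   | 0 => E0 | 1 => E1 | _ => 0 end.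
have el : e ^+ 2 <= lam ^+ 2 by rewrite ler_pXn2r ?nnegrE // ltW.
have hq := @quad_bound R (d 2) (d 1) (d 0) y X Z c lam e
   (fun i hi => (hy i hi).1) (ltW c0) (ltW lp) el hyq.
have hS := @isd_unique R _ _ _ (hg Ew) (dir_E2 lam y W Ew).
rewrite !big_ord_recr big_ord0 /= add0r -/X -/Z -/Y -/c -/E0 -/E1 in hS.
have eEw : famnorm 2 Ew = Num.sqrt (frob2 E0 + frob2 E1).
  by rewrite /famnorm !big_ord_recr big_ord0 /= add0r.
have hsum : \sum_(l < 2) frobdot (D l) (Ew l) = frobdot (D 0%N) E0 + frobdot (D 1%N) E1.
  by rewrite !big_ord_recr big_ord0 /= add0r.
have hcs := @fam_cs R d 2 D Ew.
rewrite hsum eEw hS in hcs.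
set Mp := E1 *m X + Z *m E0 in hS hcs.
have i1 : frobdot Y (E1 *m X) = frobdot (Y *m X^T) E1 by apply: frobdot_mulr.
have i2 : frobdot Y (Z *m E0) = frobdot (Z^T *m Y) E0 by apply: frobdot_mull.
have f1 : frobdot (Z *m X - c *: Y) Mp =
    frobdot (Z *m X) Mp - c * (frobdot (Y *m X^T) E1 + frobdot (Z^T *m Y) E0).
  by rewrite frobdotBl frobdotZl /Mp [frobdot Y _]frobdotDr i1 i2.
have f2 : frob2 E0 = lam * frobdot X E0 - c * frobdot (Z^T *m Y) E0.
  by rewrite frob2_dot {1}/E0 frobdotBl !frobdotZl.
have f3 : frob2 E1 = lam * frobdot Z E1 - c * frobdot (Y *m X^T) E1.
  by rewrite frob2_dot {1}/E1 frobdotBl !frobdotZl.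
set a0 := Num.sqrt (frob2 X); set a1 := Num.sqrt (frob2 Z).
set b0 := Num.sqrt (frob2 E0); set b1 := Num.sqrt (frob2 E1).
have ha0 : 0 <= a0 by apply: sqrtr_ge0.
have ha1 : 0 <= a1 by apply: sqrtr_ge0.
have hb0 : 0 <= b0 by apply: sqrtr_ge0.
have hb1 : 0 <= b1 by apply: sqrtr_ge0.
have qa0 : a0 ^+ 2 = frob2 X by rewrite sqr_sqrtr ?frob2_ge0.
have qa1 : a1 ^+ 2 = frob2 Z by rewrite sqr_sqrtr ?frob2_ge0.
have qb0 : b0 ^+ 2 = frob2 E0 by rewrite sqr_sqrtr ?frob2_ge0.
have qb1 : b1 ^+ 2 = frob2 E1 by rewrite sqr_sqrtr ?frob2_ge0.
have hMp : Num.sqrt (frob2 Mp) <= b1 * a0 + a1 * b0.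
  apply: le_trans (sqrt_frob2D _ _) _.
  by apply: lerD; apply: sqrt_frob2_mul.
have hcub : `|frobdot (Z *m X) Mp| <= (a0 * a1) * (b1 * a0 + a1 * b0).
  apply: le_trans (frobdot_abs _ _) _.
  apply: ler_pM; rewrite ?sqrtr_ge0 //.
  by rewrite mulrC; apply: sqrt_frob2_mul.
have lowS : 2 * (b0 ^+ 2 + b1 ^+ 2) - 2 * (a0 * a1) * (b1 * a0 + a1 * b0) <=
   2 * frobdot (Z *m X - c *: Y) Mp + 2 * lam * (frobdot X E0 + frobdot Z E1).
  rewrite f1 qb0 qb1 f2 f3.
  have := ler_norm (- frobdot (Z *m X) Mp); rewrite normrN.
  lra.
have nD0 : 0 <= famnorm 2 D by apply: sqrtr_ge0.
have sE : s ^+ 2 = a0 ^+ 2 + a1 ^+ 2.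
  rewrite qa0 qa1 /s /famnorm sqr_sqrtr; last by apply: sumr_ge0 => l _; apply: frob2_ge0.
  by rewrite !big_ord_recr big_ord0 /= add0r.
have hq' : e ^+ 2 * s ^+ 2 <= b0 ^+ 2 + b1 ^+ 2 by rewrite sE qa0 qa1 qb0 qb1.
rewrite -qb0 -qb1 in hcs.
have fin := @final2 R s a0 a1 b0 b1 (famnorm 2 D) e _ ha0 ha1 hb0 hb1 nD0 e0 s0 sE hcs lowS hq' hse.
have [ez|ep] := eqVneq e 0.
  have : s ^+ 2 <= 0 by rewrite -ez.
  move=> hs2; have sz : s = 0.
    by apply/eqP; rewrite -(sqrf_eq0 s) eq_le hs2 sqr_ge0.
  by rewrite sz mulr_ge0 // divr_ge0 ?mulr_ge0 ?addr_ge0 // ltW.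
have epos : 0 < e by rewrite lt_neqAle eq_sym ep e0.
have -> : 2 * (c + y 0) / (c * mu) = e^-1 by rewrite /e invf_div mulrAC.
by rewrite mulrC ler_pdivlMr // mulrC.
Qed.



Theorem proposition3p4 (R : realType) (L : nat) (d : nat -> nat) (lam : R) (y : nat -> R) :
  (2 <= L)%N ->
  (forall k, (k <= L)%N -> (0 < d k)%N) ->
  0 < lam ->
  (forall i j, (i <= j)%N -> (j < dmin d L)%N -> y j <= y i) ->
  (forall i, (i < dmin d L)%N -> 0 <= y i) ->
  (forall k, (0 < k)%N -> (k < L)%N -> (dmin d L <= d k)%N) ->
  (L = 2%N -> forall i, (i < dmin d L)%N -> 0 < y i -> lam != y i ^+ 2) ->
  ((3 <= L)%N -> forall i, (i < dmin d L)%N -> 0 < y i -> lam != crit3 L (y i)) ->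
  forall W D : wfam R d,
    is_gradG L lam y W D ->
    famnorm L W <= eps0 d L lam y ->
    famnorm L W <= kappa0 d L lam y * famnorm L D.
Proof.
move=> L2 dpos lp hmon hpos _ _ _ W D hg he.
have hy : forall i, (i < dmin d L)%N -> 0 <= y i /\ y i <= y 0.
  by move=> i hi; split; [exact: hpos | exact: hmon].
have [L2e|L2n] := eqVneq L 2%N.
  subst L; apply: main2 => //; apply: dpos => //.
have L3 : (3 <= L)%N by rewrite ltn_neqAle eq_sym L2n L2.
rewrite /kappa0 (negbTE L2n).
apply: (@main3 R L d lam y W D) => //; first exact: dpos.
  exact: dpos.
have dm : (0 < dmin d L)%N by rewrite /dmin leq_min !dpos.
have y00 : 0 <= y 0 by case: (hy 0 dm).
move: he; rewrite /eps0 (negbTE L2n).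
have [yz|yn] := eqVneq (y 0) 0.
  by move=> _; rewrite yz mul0r divr_ge0 ?sqrtr_ge0.
rewrite le_min => /andP [_ hb].
have y0p : 0 < y 0 by rewrite lt_neqAle eq_sym yn y00.
have hk : (0 < L - 2)%N by rewrite subn_gt0.
have hq : 0 <= Num.sqrt lam / (3 * y 0) by rewrite divr_ge0 ?sqrtr_ge0 ?mulr_ge0.
have := @pow_from_root R _ _ (L - 2) hk (sqrtr_ge0 _) hq hb.
move=> h; apply: le_trans (ler_wpM2l (ltW y0p) h) _.
rewrite le_eqVlt; apply/orP; left; apply/eqP; field.
exact: lt0r_neq0.
Qed.
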